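(* There exists a closed algebra on $\mathbb{N}$ whose clone of term operations is not a Borel subset of $\mathscr{O}$. Moreover, this algebra can be chosen so that all of its fundamental operations are unary.
   Context: Let $\mathbb{N}=\{0,1,2,\dots\}$. For $n\ge 1$ let $\mathscr{O}^{(n)}=\mathbb{N}^{\mathbb{N}^n}$ be the set of all $n$-ary functions on $\mathbb{N}$, and $\mathscr{O}=\bigcup_{n\ge1}\mathscr{O}^{(n)}$. Each $\mathscr{O}^{(n)}$ carries the product topology of the discrete topology on $\mathbb{N}$ (so it is homeomorphic to the Baire space), and $\mathscr{O}$ carries the sum (disjoint union) topology; $\mathscr{O}$ is a Polish space. A clone is a subset of $\mathscr{O}$ containing all projections and closed under composition. An algebra on $\mathbb{N}$ is given by a set $\mathscr{F}\subseteq\mathscr{O}$ of fundamental operations; it is called closed (resp. Borel) if $\mathscr{F}$ is a closed (resp. Borel) subset of $\mathscr{O}$. Its clone of term operations is the smallest clone containing $\mathscr{F}$. *)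

(* Defs.v *)
From mathcomp Require Import all_boot.
From Stdlib Require Import List.

Set Implicit Arguments.
Unset Strict Implicit.
Unset Printing Implicit Defensive.

(* An (n+1)-ary operation on nat: a map N^(n+1) -> N, tuples as 'I_(n+1) -> nat. *)
Definition op (n : nat) := ('I_n.+1 -> nat) -> nat.

Definition Ops := {n : nat & op n}.
Definition mkop (n : nat) (f : op n) : Ops := existT op n f.

Definition arity (h : Ops) : nat := (projT1 h).+1.

(* Open sets of the sum of the product-of-discrete topologies: U is open iff
   around every f in U (of arity n+1) there is a basic open neighbourhood,
   i.e. a finite set of inputs such that every g of the same arity agreeing
   with f on them is in U. *)
Definition is_open (U : Ops -> Prop) : Prop :=
  forall (n : nat) (f : op n), U (mkop f) ->
    exists pts : list ('I_n.+1 -> nat),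
      forall g : op n, (forall x, In x pts -> g x = f x) -> U (mkop g).

Definition is_closed (A : Ops -> Prop) : Prop := is_open (fun h => ~ A h).

Definition is_borel (A : Ops -> Prop) : Prop :=
  forall S : (Ops -> Prop) -> Prop,
    (forall B C : Ops -> Prop, (forall h, B h <-> C h) -> S B -> S C) ->
    (forall U, is_open U -> S U) ->
    (forall B, S B -> S (fun h => ~ B h)) ->
    (forall Bs : nat -> Ops -> Prop, (forall k, S (Bs k)) ->
        S (fun h => exists k, Bs k h)) ->
    S A.

Definition is_clone (C : Ops -> Prop) : Prop :=
  (forall (n : nat) (i : 'I_n.+1), C (mkop (fun x : 'I_n.+1 -> nat => x i))) /\
  (forall (n m : nat) (f : op n) (gs : 'I_n.+1 -> op m),
      C (mkop f) -> (forall i, C (mkop (gs i))) ->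
      C (mkop (fun x : 'I_m.+1 -> nat => f (fun i => gs i x)))).

Definition term_clone (F : Ops -> Prop) : Ops -> Prop :=
  fun h => forall C, is_clone C -> (forall g, F g -> C g) -> C h.

(* Main.v *)
Require Import Defs.
From mathcomp Require Import all_boot zify.
From Stdlib Require Import List Classical ClassicalEpsilon FunctionalExtensionality.

Set Implicit Arguments.
Unset Strict Implicit.
Unset Printing Implicit Defensive.

Definition r (k : nat) : nat :=
  if k %% 4 == 1 then 4 * (odflt (0,0) (unpickle (k %/ 4) : option (nat * nat))).1 + 2 else 3.
Definition psi (x y : nat -> nat) (k : nat) : nat :=
  if k %% 4 == 0 then 4 * pickle (x (k %/ 4), y (k %/ 4)) + 1 else 3.
Definition phi (x : nat -> nat) (k : nat) : nat :=
  if k %% 4 == 0 then 4 * x (k %/ 4) + 2 else 3.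
Definition pre (x : nat -> nat) (n : nat) : list nat := mkseq x n.
Definition Bxy (x y : nat -> nat) := forall n, x (pickle (pre x n, pre y n)) != 0.
Definition Dg (x : nat -> nat) := exists y, Bxy x y.
Definition agree (x x' : nat -> nat) n := forall m, m < n -> x m = x' m.

Lemma r_psi x y k : r (psi x y k) = phi x k.
Proof.
rewrite /psi /phi; case: ifP => H //; rewrite /r.
have -> : (4 * pickle (x (k %/ 4), y (k %/ 4)) + 1) %% 4 = 1 by lia.
rewrite eqxx.
have -> : (4 * pickle (x (k %/ 4), y (k %/ 4)) + 1) %/ 4 = pickle (x (k %/ 4), y (k %/ 4)) by lia.
by rewrite pickleK.
Qed.

Lemma r_r k : r (r k) = 3.
Proof.
rewrite {2}/r; case: ifP => H //; rewrite /r.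
have -> : (4 * (odflt (0, 0) (unpickle (k %/ 4) : option (nat*nat))).1 + 2) %% 4 == 1 = false.
  by apply/negbTE; lia.
by [].
Qed.

Lemma psi_r x y k : psi x y (r k) = 3.
Proof.
rewrite /r; case: ifP => H //; rewrite /psi.
have -> : (4 * (odflt (0, 0) (unpickle (k %/ 4) : option (nat*nat))).1 + 2) %% 4 == 0 = false.
  by apply/negbTE; lia.
by [].
Qed.

Lemma psi_psi x y x' y' k : psi x y (psi x' y' k) = 3.
Proof.
rewrite {2}/psi; case: ifP => H //; rewrite /psi.
have -> : (4 * pickle (x' (k %/ 4), y' (k %/ 4)) + 1) %% 4 == 0 = false.
  by apply/negbTE; lia.
by [].
Qed.

Lemma r3 : r 3 = 3. Proof. by []. Qed.
Lemma psi3 x y : psi x y 3 = 3. Proof. by []. Qed.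

Lemma agree_pre x x' n : agree x x' n -> pre x n = pre x' n.
Proof.
move=> H; rewrite /pre /mkseq; apply/eq_in_map => m; rewrite mem_iota add0n => /andP[_ Hm].
exact: H.
Qed.

Lemma pre_agree x x' n : pre x n = pre x' n -> agree x x' n.
Proof.
move=> H m Hm; have := congr1 (fun s => seq.nth 0 s m) H.
by rewrite /pre !nth_mkseq.
Qed.

Lemma agree_le x x' n m : agree x x' n -> m <= n -> agree x x' m.
Proof. move=> H Hmn k Hk; apply: H; lia. Qed.

Lemma agree_sym x x' n : agree x x' n -> agree x' x n.
Proof. by move=> H k Hk; rewrite H. Qed.

Lemma agree_trans x x' x'' n : agree x x' n -> agree x' x'' n -> agree x x'' n.
Proof. by move=> H H' k Hk; rewrite H // H'. Qed.

Definition closed2 (P : (nat -> nat) -> (nat -> nat) -> Prop) :=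
  forall x y, ~ P x y -> exists n, forall x' y', agree x x' n -> agree y y' n -> ~ P x' y'.
Definition analytic (A : (nat -> nat) -> Prop) :=
  exists P, closed2 P /\ forall x, A x <-> exists y, P x y.
Definition Good (A : (nat -> nat) -> Prop) := analytic A /\ analytic (fun x => ~ A x).
Definition open1 (V : (nat -> nat) -> Prop) :=
  forall x, V x -> exists n, forall x', agree x x' n -> V x'.

Lemma analytic_ext A A' : (forall x, A x <-> A' x) -> analytic A -> analytic A'.
Proof.
move=> HA [P [HP HPA]]; exists P; split => // x; rewrite -HA; exact: HPA.
Qed.

Lemma Good_ext A A' : (forall x, A x <-> A' x) -> Good A -> Good A'.
Proof.
move=> HA [H1 H2]; split; first exact: analytic_ext H1.
apply: analytic_ext H2 => x; rewrite HA; tauto.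
Qed.

Lemma Good_compl A : Good A -> Good (fun x => ~ A x).
Proof.
move=> [H1 H2]; split => //; apply: analytic_ext H1 => x; tauto.
Qed.

Lemma open_good V : open1 V -> Good V.
Proof.
move=> HV; split.
- exists (fun x y => forall x', agree x x' (y 0) -> V x'); split.
  + move=> x y HP; exists (y 0).+1 => x' y' Hx Hy HP'; apply: HP => x'' Hx''.
    have Hy0 : y 0 = y' 0 by apply: Hy.
    apply: HP'; rewrite -Hy0; apply: agree_trans Hx''.
    apply: agree_sym; apply: agree_le Hx _; lia.
  + move=> x; split.
    * move=> /HV [n Hn]; by exists (fun _ => n).
    * move=> [y Hy]; apply: Hy => m; done.
- exists (fun x (y : nat -> nat) => ~ V x); split.
  + move=> x y /NNPP /HV [n Hn]; exists n => x' y' Hx _; move: (Hn _ Hx); tauto.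
  + move=> x; split; [by move=> H; exists (fun _ => 0) | by move=> [_ H]].
Qed.

Lemma analytic_union (A : nat -> (nat -> nat) -> Prop) :
  (forall k, analytic (A k)) -> analytic (fun x => exists k, A k x).
Proof.
move=> H.
pose Pk := fun k => proj1_sig (constructive_indefinite_description _ (H k)).
have HPk : forall k, closed2 (Pk k) /\ forall x, A k x <-> exists y, Pk k x y.
  move=> k; exact: (proj2_sig (constructive_indefinite_description _ (H k))).
exists (fun x z => Pk (z 0) x (fun j => z j.+1)); split.
- move=> x z HQ; have [n Hn] := (proj1 (HPk (z 0))) _ _ HQ.
  exists n.+1 => x' z' Hx Hz.
  have Hz0 : z 0 = z' 0 by apply: Hz.
  rewrite -Hz0; apply: Hn; first by apply: agree_le Hx _.
  by move=> m Hm; apply: Hz.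
- move=> x; split.
  + move=> [k /(proj2 (HPk k)) [y Hy]].
    exists (fun j => if j is j'.+1 then y j' else k); exact: Hy.
  + move=> [z Hz]; exists (z 0); apply/(proj2 (HPk (z 0))); by exists (fun j => z j.+1).
Qed.

Fixpoint bnd (k n : nat) : nat :=
  if n is n'.+1 then maxn (bnd k n') (pickle (k, n')).+1 else 0.

Lemma bndP k n j : j < n -> pickle (k, j) < bnd k n.
Proof.
elim: n => [//|n IH] Hj.
have -> : bnd k n.+1 = maxn (bnd k n) (pickle (k, n)).+1 by [].
case: (ltngtP j n) => Hjn.
- have := IH Hjn; lia.
- lia.
- subst; lia.
Qed.

Lemma analytic_inter (A : nat -> (nat -> nat) -> Prop) :
  (forall k, analytic (A k)) -> analytic (fun x => forall k, A k x).
Proof.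
move=> H.
pose Pk := fun k => proj1_sig (constructive_indefinite_description _ (H k)).
have HPk : forall k, closed2 (Pk k) /\ forall x, A k x <-> exists y, Pk k x y.
  move=> k; exact: (proj2_sig (constructive_indefinite_description _ (H k))).
exists (fun x z => forall k, Pk k x (fun j => z (pickle (k, j)))); split.
- move=> x z HQ; have [k Hk] := not_all_ex_not _ _ HQ.
  have [n Hn] := (proj1 (HPk k)) _ _ Hk.
  exists (maxn n (bnd k n)) => x' z' Hx Hz HQ'; apply: (Hn x' (fun j => z' (pickle (k, j)))).
  + apply: agree_le Hx _; lia.
  + move=> m Hm; apply: Hz; exact: leq_trans (bndP k Hm) (leq_maxr _ _).
  + exact: HQ'.
- move=> x; split.
  + move=> HA.
    have HY : forall k, exists y, Pk k x y by move=> k; apply/(proj2 (HPk k)).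
    pose Y := fun k => proj1_sig (constructive_indefinite_description _ (HY k)).
    exists (fun m => match (unpickle m : option (nat * nat)) with Some (k, j) => Y k j | None => 0 end).
    move=> k.
    have -> : (fun j => match (unpickle (pickle (k, j)) : option (nat * nat)) with
                 Some (k0, j0) => Y k0 j0 | None => 0 end) = Y k.
      by apply: functional_extensionality => j; rewrite pickleK.
    exact: (proj2_sig (constructive_indefinite_description _ (HY k))).
  + move=> [z Hz] k; apply/(proj2 (HPk k)); by exists (fun j => z (pickle (k, j))).
Qed.

Lemma Good_union (A : nat -> (nat -> nat) -> Prop) :
  (forall k, Good (A k)) -> Good (fun x => exists k, A k x).
Proof.
move=> H; split.
- apply: analytic_union => k; exact: (proj1 (H k)).
- apply: analytic_ext (analytic_inter (fun k => proj2 (H k))) => x.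
  split; [move=> Hx [k Hk]; exact: Hx k Hk | move=> Hx k Hk; apply: Hx; by exists k].
Qed.

Lemma universal P : closed2 P ->
  exists c : nat -> nat, forall x y, P x y <-> forall n, c (pickle (pre x n, pre y n)) != 0.
Proof.
move=> HP.
exists (fun k => match (unpickle k : option (list nat * list nat)) with
  | Some (s, t) => if excluded_middle_informative
        (exists x y, P x y /\ pre x (size s) = s /\ pre y (size s) = t) then 1 else 0
  | None => 0 end).
move=> x y; split.
- move=> Hxy n; rewrite pickleK.
  case: excluded_middle_informative => // Hn; exfalso; apply: Hn.
  by exists x, y; rewrite /pre size_mkseq.
- move=> Hn; apply: NNPP => HN; have [n Hnb] := HP _ _ HN.
  move: (Hn n); rewrite pickleK.
  case: excluded_middle_informative => // [[x' [y' [Hp [E1 E2]]]]] _.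
  rewrite /pre size_mkseq in E1 E2.
  apply: (Hnb x' y') => //; apply: agree_sym; apply: pre_agree; done.
Qed.

Lemma diag : ~ analytic (fun x => ~ Dg x).
Proof.
move=> [P [HP HA]]; have [c Hc] := universal HP.
have := HA c; rewrite /Dg /Bxy.
have E : (exists y, P c y) <-> exists y, forall n, c (pickle (pre c n, pre y n)) != 0.
  split => [[y Hy]|[y Hy]]; exists y; by apply/Hc.
rewrite E; tauto.
Qed.

Definition hat (f : nat -> nat) : op 0 := fun v => f (v ord0).
Definition Pf (f : nat -> nat) := f = r \/ exists x y, Bxy x y /\ f = psi x y.
Definition FF (h : Ops) := exists f, Pf f /\ h = mkop (hat f).
Definition M (w : nat -> nat) :=
  (forall n, w n = n) \/ (forall n, w n = 3) \/ (forall n, w n = r n) \/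
  (exists x y, Bxy x y /\ forall n, w n = psi x y n) \/
  (exists x y, Bxy x y /\ forall n, w n = r (psi x y n)).
Definition K (h : Ops) := exists n (i : 'I_n.+1) (w : nat -> nat),
  M w /\ h = mkop (fun v : 'I_n.+1 -> nat => w (v i)).

Lemma M_ext w w2 : (forall n, w n = w2 n) -> M w -> M w2.
Proof.
move=> E [H|[H|[H|[[x [y [B H]]]|[x [y [B H]]]]]]].
- by left => n; rewrite -E.
- by right; left => n; rewrite -E.
- by right; right; left => n; rewrite -E.
- by right; right; right; left; exists x, y; split => // n; rewrite -E.
- by right; right; right; right; exists x, y; split => // n; rewrite -E.
Qed.

Lemma M3 w : M w -> w 3 = 3.
Proof.
move=> [H|[H|[H|[[x [y [B H]]]|[x [y [B H]]]]]]]; by rewrite H.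
Qed.

Lemma M_comp w w' : M w -> M w' -> M (fun n => w (w' n)).
Proof.
move=> Hw Hw'.
case: Hw' => [H'|[H'|Hw']].
  by apply: M_ext Hw => n; rewrite H'.
  by right; left => n; rewrite H' M3.
case: Hw => [H|[H|Hw]].
  by apply: M_ext (or_intror (or_intror Hw')) => n; rewrite H.
  by right; left => n; rewrite H.
have C3 : (forall n, w (w' n) = 3) -> M (fun n => w (w' n)) by move=> HH; right; left.
case: Hw' => [H'|[[x' [y' [B' H']]]|[x' [y' [B' H']]]]];
case: Hw => [H|[[x [y [B H]]]|[x [y [B H]]]]].
all: try (apply: C3 => n; rewrite H H'; first [rewrite r_r // | rewrite psi_r //
   | rewrite psi_psi // | rewrite psi_r r3 // | rewrite psi_psi r3 // | rewrite r_r psi3 r3 //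
   | rewrite r_r // | idtac]; fail).
- right; right; right; right; exists x', y'; split => // n; by rewrite H H'.
Qed.

Lemma mkop_inj n (f g : op n) : mkop f = mkop g -> f = g.
Proof. move=> H; exact: (@Eqdep_dec.inj_pair2_eq_dec nat PeanoNat.Nat.eq_dec op n f g H). Qed.

Lemma K_clone : is_clone K.
Proof.
split.
- move=> n i; exists n, i, id; split; [by left | by []].
- move=> n m f gs [n0 [i0 [w [Hw He]]]] Hgs.
  have E := congr1 (@projT1 _ _) He; simpl in E; subst n0.
  have Hf := mkop_inj He.
  have [n1 [i1 [w' [Hw' He']]]] := Hgs i0.
  have E' := congr1 (@projT1 _ _) He'; simpl in E'; subst n1.
  have Hg := mkop_inj He'.
  exists m, i1, (fun k => w (w' k)); split; first exact: M_comp.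
  rewrite Hf /= Hg; by [].
Qed.

Lemma FF_K g : FF g -> K g.
Proof.
move=> [f [Hf ->]]; exists 0, ord0, f; split => //.
case: Hf => [->|[x [y [B ->]]]].
- by right; right; left.
- by right; right; right; left; exists x, y.
Qed.

Lemma phi_r_psi x y : hat (phi x) = (fun v => hat r (fun _ : 'I_1 => hat (psi x y) v)).
Proof. apply: functional_extensionality => v; by rewrite /hat r_psi. Qed.

Lemma term_phi x : Dg x -> term_clone FF (mkop (hat (phi x))).
Proof.
move=> [y B] C [_ HC] HF.
rewrite (phi_r_psi x y).
apply: (HC 0 0 (hat r) (fun _ => hat (psi x y))).
- apply: HF; exists r; split => //; by left.
- move=> _; apply: HF; exists (psi x y); split => //; right; by exists x, y.
Qed.

Lemma K_phi x : K (mkop (hat (phi x))) -> Dg x.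
Proof.
move=> [n [i [w [Hw He]]]].
have E := congr1 (@projT1 _ _) He; simpl in E; subst n.
have Hf := mkop_inj He.
have Hk : forall k, phi x k = w k.
  move=> k; have := congr1 (fun f => f (fun _ => k)) Hf; by rewrite /hat.
case: Hw => [H|[H|[H|[[x' [y' [B H]]]|[x' [y' [B H]]]]]]].
- by have := Hk 1; rewrite H.
- have := Hk 0; rewrite H /phi /=; lia.
- by have := Hk 0; rewrite H /phi /r /=; lia.
- have := Hk 0; rewrite H /phi /psi /=; lia.
- have Ex : x = x'.
    apply: functional_extensionality => m.
    have := Hk (4 * m); rewrite H r_psi /phi.
    have -> : (4 * m) %% 4 == 0 by lia.
    have -> : (4 * m) %/ 4 = m by lia.
    lia.
  by exists y'; rewrite Ex.
Qed.

Lemma V_Dg x : term_clone FF (mkop (hat (phi x))) <-> Dg x.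
Proof.
split; last exact: term_phi.
move=> H; apply: K_phi; apply: H; [exact: K_clone | exact: FF_K].
Qed.

Definition dec (p : nat) : nat * nat := odflt (0,0) (unpickle p : option (nat * nat)).
Definition dx (u : nat -> nat) (m : nat) := (dec (u (4 * m) %/ 4)).1.
Definition dy (u : nat -> nat) (m : nat) := (dec (u (4 * m) %/ 4)).2.

Lemma psi_decode u x' y' k : psi x' y' k = u k -> psi (dx u) (dy u) k = u k.
Proof.
rewrite /psi; case: ifP => H E //.
have Hk : 4 * (k %/ 4) = k by move/eqP: H; lia.
have Ep : (dx u (k %/ 4), dy u (k %/ 4)) = (x' (k %/ 4), y' (k %/ 4)).
  rewrite /dx /dy /dec Hk -E.
  have -> : (4 * pickle (x' (k %/ 4), y' (k %/ 4)) + 1) %/ 4 = pickle (x' (k %/ 4), y' (k %/ 4)) by lia.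
  by rewrite pickleK.
by rewrite Ep.
Qed.

Lemma P_closed u : ~ Pf u -> exists N, forall h, agree u h N -> ~ Pf h.
Proof.
move=> Hu.
have [k0 Hk0] : exists k0, u k0 <> r k0.
  apply: NNPP => HN; apply: Hu; left; apply: functional_extensionality => k.
  apply: NNPP => Hk; apply: HN; by exists k.
have [N1 HN1] : exists N1, forall x' y', Bxy x' y' -> agree u (psi x' y') N1 -> False.
  case: (classic (exists k, u k <> psi (dx u) (dy u) k)) => [[k Hk]|Hall].
  - exists k.+1 => x' y' _ Ha; apply: Hk; symmetry; apply: (psi_decode (x':=x') (y':=y')).
    symmetry; apply: Ha; lia.
  - have Hu' : forall k, u k = psi (dx u) (dy u) k.
      move=> k; apply: NNPP => Hk; apply: Hall; by exists k.
    have HB : ~ Bxy (dx u) (dy u).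
      move=> HB; apply: Hu; right; exists (dx u), (dy u); split => //.
      exact: functional_extensionality.
    have [n Hn] := not_all_ex_not _ _ HB.
    set j := pickle (pre (dx u) n, pre (dy u) n) in Hn.
    have Hj : dx u j = 0.
      case E: (dx u j == 0); [by move/eqP: E | exfalso; apply: Hn; by rewrite E].
    exists (4 * (maxn n j.+1)) => x' y' B' Ha.
    have Hxy : forall m, m < maxn n j.+1 -> dx u m = x' m /\ dy u m = y' m.
      move=> m Hm; have := Ha (4 * m) ltac:(lia); rewrite Hu' /psi.
      have -> : (4 * m) %% 4 == 0 by lia.
      have -> : (4 * m) %/ 4 = m by lia.
      move=> E; have E2 : pickle (dx u m, dy u m) = pickle (x' m, y' m) by lia.
      have := pcan_inj pickleK E2; case => -> ->; by [].
    have Ex : pre (dx u) n = pre x' n.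
      apply: agree_pre => m Hm; apply: (proj1 (Hxy m _)); lia.
    have Ey : pre (dy u) n = pre y' n.
      apply: agree_pre => m Hm; apply: (proj2 (Hxy m _)); lia.
    have := B' n; rewrite -Ex -Ey -/j -(proj1 (Hxy j _)) ?Hj //; lia.
exists (maxn k0.+1 N1) => h Ha [Eh|[x' [y' [B' Eh]]]]; subst h.
- apply: Hk0; apply: Ha; lia.
- apply: (HN1 x' y' B'); apply: agree_le Ha _; lia.
Qed.

Lemma FF_closed : is_closed FF.
Proof.
rewrite /is_closed /is_open => n; case: n => [|n] f Hf.
- pose u := fun k => f (fun _ => k).
  have Ef : f = hat u.
    apply: functional_extensionality => v; rewrite /hat /u; congr f.
    apply: functional_extensionality => i; by rewrite (ord1 i).
  have Hu : ~ Pf u by move=> Hp; apply: Hf; exists u; rewrite Ef.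
  have [N HN] := P_closed Hu.
  exists (List.map (fun k => fun _ : 'I_1 => k) (List.seq 0 N)) => g Hg [g' [Pg Eg]].
  have Eg' := mkop_inj Eg.
  apply: (HN g') => // m Hm.
  have Hin : In (fun _ : 'I_1 => m) (List.map (fun k => fun _ : 'I_1 => k) (List.seq 0 N)).
    apply: in_map; apply/in_seq; lia.
  have := Hg _ Hin; rewrite Eg' /hat => E; by rewrite /u -E.
- exists nil => g _ [g' [_ Eg]]; have := congr1 (@projT1 _ _) Eg; by [].
Qed.

Definition mx (pts : list ('I_1 -> nat)) := fold_right maxn 0 (List.map (fun v => v ord0) pts).

Lemma mx_ge pts v : In v pts -> v ord0 <= mx pts.
Proof.
rewrite /mx; elim: pts => [//|a pts IH] /= [->|H]; first lia.
have := IH H; lia.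
Qed.

Lemma open_pre U : is_open U -> open1 (fun x => U (mkop (hat (phi x)))).
Proof.
move=> HU x Hx; have [pts Hpts] := HU 0 (hat (phi x)) Hx.
exists (mx pts).+1 => x' Ha; apply: Hpts => v Hv; rewrite /hat /phi.
case: ifP => // _; rewrite (Ha (v ord0 %/ 4)) //.
have := mx_ge Hv; have := leq_div (v ord0) 4; lia.
Qed.

Theorem mainTheorem1 :
  exists F : Ops -> Prop,
    is_closed F /\
    (forall h, F h -> arity h = 1) /\
    ~ is_borel (term_clone F).
Proof.
exists FF; split; first exact: FF_closed.
split; first by move=> h [f [_ ->]].
move=> Hb.
have HG : Good (fun x => term_clone FF (mkop (hat (phi x)))).
  apply: (Hb (fun B => Good (fun x => B (mkop (hat (phi x)))))).
  - move=> B C HBC; apply: Good_ext => x; exact: HBC.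
  - move=> U HU; apply: open_good; exact: open_pre.
  - move=> B; exact: Good_compl.
  - move=> Bs HBs; exact: (Good_union (A := fun k x => Bs k (mkop (hat (phi x)))) HBs).
apply: diag; apply: analytic_ext (proj2 HG) => x.
split => H H'; apply: H; by apply/V_Dg.
Qed.
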